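(* Let $\beta>0$ and $f\in\mathcal H_B^\beta$, and let $a=a(\beta)>0$ be any constant satisfying $(e^a-1)+a^\beta/(\lfloor\beta\rfloor!)\le1/2$. Then for all $x\in[0,1]$ and $h$ with $x+h\in[0,1]$ and $$|h|\le a\Big(\frac{\min(f(x),1-f(x))}{\|f\|_{\mathcal H_B^\beta}}\Big)^{1/\beta},$$ we have $$|f(x+h)-f(x)|=|(1-f(x))-(1-f(x+h))|\le\tfrac12\min(f(x),1-f(x)),$$ and in particular $$\tfrac14f(x)(1-f(x))\le f(x+h)(1-f(x+h))\le\tfrac94f(x)(1-f(x)).$$
   Context: For $\beta>0$, $\lfloor\beta\rfloor$ is the greatest integer strictly smaller than $\beta$. $\|f\|_{C^\beta([0,1])}=\|f\|_\infty+\|f^{(\lfloor\beta\rfloor)}\|_\infty+\sup_{x\ne y}|f^{(\lfloor\beta\rfloor)}(x)-f^{(\lfloor\beta\rfloor)}(y)|/|x-y|^{\beta-\lfloor\beta\rfloor}$. For a function $g$, $|g|_{\mathcal H^\beta}=\max_{1\le j<\beta}\big(\sup_{x\in[0,1]}|g^{(j)}(x)|^\beta/|g(x)|^{\beta-j}\big)^{1/j}$, with $0/0:=0$ and $|g|_{\mathcal H^\beta}=0$ if $\beta\le1$. $\mathcal H_B^\beta=\{f:[0,1]\to[0,1]:\ \|f\|_{\mathcal H_B^\beta}:=\|f\|_{C^\beta([0,1])}+|f|_{\mathcal H^\beta}+|1-f|_{\mathcal H^\beta}<\infty\}$. *)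

(* Defs.v *)
From Stdlib Require Import Reals List ClassicalEpsilon Factorial.
From Coquelicot Require Import Coquelicot.
Open Scope R_scope.

(* x^y for x >= 0 with the convention 0^y = 0 (y > 0 in all uses). *)
Definition rpow (x y : R) : R :=
  if Req_EM_T x 0 then 0 else Rpower x y.

Definition is_deriv_01 (g g' : R -> R) : Prop :=
  forall x, 0 <= x <= 1 ->
    filterlim (fun y => (g y - g x) / (y - x))
      (within (fun y => 0 <= y <= 1 /\ y <> x) (locally x))
      (locally (g' x)).

Definition deriv_chain (g : R -> R) (D : nat -> R -> R) (m : nat) : Prop :=
  (forall x, 0 <= x <= 1 -> D 0%nat x = g x) /\
  (forall j, (j < m)%nat -> is_deriv_01 (D j) (D (S j))).

Definition sup01 (F : R -> R) : Rbar :=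
  Lub_Rbar (fun r => exists x, 0 <= x <= 1 /\ r = F x).

(* ||g||_{C^beta([0,1])}, with D the derivative chain of g, m = floor beta *)
Definition Cbeta_norm (beta : R) (m : nat) (D : nat -> R -> R) : Rbar :=
  Rbar_plus (sup01 (fun x => Rabs (D 0%nat x)))
   (Rbar_plus (sup01 (fun x => Rabs (D m x)))
      (Lub_Rbar (fun r => exists x y, 0 <= x <= 1 /\ 0 <= y <= 1 /\ x <> y /\
          r = Rabs (D m x - D m y) / Rpower (Rabs (x - y)) (beta - INR m)))).

(* sup_x |g^(j)(x)|^beta / |g(x)|^(beta-j), with 0/0 := 0 and c/0 := +oo for c<>0 *)
Definition Hterm_sup (beta : R) (D : nat -> R -> R) (j : nat) : Rbar :=
  if excluded_middle_informative
       (exists x, 0 <= x <= 1 /\ D 0%nat x = 0 /\ D j x <> 0)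
  then p_infty
  else Lub_Rbar (fun r => r = 0 \/ exists x, 0 <= x <= 1 /\ D 0%nat x <> 0 /\
          r = rpow (Rabs (D j x)) beta / rpow (Rabs (D 0%nat x)) (beta - INR j)).

Definition Rbar_maxb (u v : Rbar) : Rbar :=
  if excluded_middle_informative (Rbar_le u v) then v else u.

Definition Rbar_root (s : Rbar) (j : nat) : Rbar :=
  match s with
  | Finite r => Finite (rpow r (/ INR j))
  | p_infty => p_infty
  | m_infty => Finite 0
  end.

(* |g|_{H^beta} = max_{1 <= j < beta} (sup ...)^{1/j}; it is 0 if beta <= 1 (m = 0) *)
Definition H_seminorm (beta : R) (m : nat) (D : nat -> R -> R) : Rbar :=
  fold_right Rbar_maxb (Finite 0)
    (map (fun j => Rbar_root (Hterm_sup beta D j) j) (seq 1 m)).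

(* ||f||_{H_B^beta}, D derivative chain of f, E derivative chain of 1 - f *)
Definition HB_norm (beta : R) (m : nat) (D E : nat -> R -> R) : Rbar :=
  Rbar_plus (Cbeta_norm beta m D)
    (Rbar_plus (H_seminorm beta m D) (H_seminorm beta m E)).

(* Main.v *)
Require Import Defs.
From Stdlib Require Import Reals List ClassicalEpsilon Factorial Lra Lia.
From Coquelicot Require Import Coquelicot.
Open Scope R_scope.

Lemma ball_R x e y : ball x e y <-> Rabs (y - x) < e.
Proof. unfold ball; simpl; unfold AbsRing_ball, abs, minus, plus, opp; simpl. tauto. Qed.



Lemma exp_le_m x y : x <= y -> exp x <= exp y.
Proof. intros [H|H]. left; now apply exp_increasing. now subst; right. Qed.

Lemma deriv_interior g g' s : is_deriv_01 g g' -> 0 < s < 1 -> is_derive g s (g' s).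
Proof.
  intros Hd Hs. apply is_derive_Reals. intros eps Heps.
  assert (Hs' : 0 <= s <= 1) by lra.
  specialize (Hd s Hs' (fun r => ball (g' s) eps r)).
  assert (HB : locally (g' s) (fun r => ball (g' s) eps r)).
  { exists (mkposreal eps Heps). auto. }
  specialize (Hd HB). unfold filtermap, within in Hd.
  destruct Hd as [d Hd].
  assert (Hpos : 0 < Rmin d (Rmin s (1 - s))).
  { apply Rmin_pos. apply cond_pos. apply Rmin_pos; lra. }
  exists (mkposreal _ Hpos). intros hh Hh0 Hh. simpl in Hh.
  assert (H1 := Rmin_l d (Rmin s (1-s))). assert (H2 := Rmin_r d (Rmin s (1-s))).
  assert (H3 := Rmin_l s (1-s)). assert (H4 := Rmin_r s (1-s)).
  assert (Hb : ball s d (s + hh)) by (apply ball_R; replace (s + hh - s) with hh by ring; lra).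
  specialize (Hd _ Hb).
  assert (Hc : 0 <= s + hh <= 1 /\ s + hh <> s).
  { split. split; apply Rabs_def2 in Hh; lra. lra. }
  specialize (Hd Hc). apply ball_R in Hd. replace (s + hh - s) with hh in Hd by ring. exact Hd.
Qed.

Lemma deriv_cont g g' s : is_deriv_01 g g' -> 0 <= s <= 1 ->
  forall eps, 0 < eps -> exists d, 0 < d /\ forall y, 0 <= y <= 1 -> Rabs (y - s) < d -> Rabs (g y - g s) < eps.
Proof.
  intros Hd Hs eps Heps.
  specialize (Hd s Hs (fun r => ball (g' s) 1 r)).
  assert (HB : locally (g' s) (fun r => ball (g' s) 1 r)).
  { exists (mkposreal 1 Rlt_0_1). auto. }
  specialize (Hd HB). unfold filtermap, within in Hd.
  destruct Hd as [d Hd].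
  set (M := Rabs (g' s) + 1).
  assert (HM : 0 < M) by (unfold M; pose proof (Rabs_pos (g' s)); lra).
  assert (Hpos : 0 < Rmin d (eps / M)).
  { apply Rmin_pos. apply cond_pos. apply Rdiv_lt_0_compat; lra. }
  exists (Rmin d (eps / M)). split; auto. intros y Hy Hys.
  destruct (Req_dec y s) as [->|Hne]. rewrite Rminus_eq_0, Rabs_R0. lra.
  assert (Hb : ball s d y) by (apply ball_R; pose proof (Rmin_l d (eps/M)); lra).
  specialize (Hd _ Hb (conj Hy Hne)). assert (Hd2 : Rabs ((g y - g s) / (y - s) - g' s) < 1) by (apply ball_R; exact Hd).
  assert (Hq : Rabs ((g y - g s) / (y - s)) <= M).
  { pose proof (Rabs_triang_inv ((g y - g s) / (y - s)) (g' s)). unfold M. lra. }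
  assert (Hys0 : 0 < Rabs (y - s)) by (apply Rabs_pos_lt; lra).
  replace (g y - g s) with ((g y - g s) / (y - s) * (y - s)) by (field; lra).
  rewrite Rabs_mult.
  apply Rle_lt_trans with (M * Rabs (y - s)).
  apply Rmult_le_compat_r; lra.
  assert (Rabs (y - s) < eps / M) by (pose proof (Rmin_r d (eps/M)); lra).
  apply Rmult_lt_compat_l with (r := M) in H; auto.
  replace (M * (eps / M)) with eps in H by (field; lra). lra.
Qed.

Lemma within_proper x : 0 <= x <= 1 ->
  ProperFilter' (within (fun y => 0 <= y <= 1 /\ y <> x) (locally x)).
Proof.
  intros Hx. constructor.
  - intros [d Hd].
    set (e := Rmin (d/2) (1/2)).
    assert (He : 0 < e) by (apply Rmin_pos; [pose proof (cond_pos d); lra | lra]).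
    assert (He1 : e <= d/2) by apply Rmin_l. assert (He2 : e <= 1/2) by apply Rmin_r.
    pose proof (cond_pos d).
    destruct (Rle_dec x (1/2)).
    + apply (Hd (x + e)). apply ball_R. replace (x + e - x) with e by ring. rewrite Rabs_pos_eq; lra.
      split; lra.
    + apply (Hd (x - e)). apply ball_R. replace (x - e - x) with (- e) by ring. rewrite Rabs_Ropp, Rabs_pos_eq; lra.
      split; lra.
  - apply within_filter. apply locally_filter.
Qed.

Lemma deriv_unique u u' v v' c : is_deriv_01 u u' -> is_deriv_01 v v' ->
  (forall z, 0 <= z <= 1 -> u z = c - v z) -> forall z, 0 <= z <= 1 -> u' z = - v' z.
Proof.
  intros Hu Hv Huv z Hz.
  specialize (Hu z Hz). specialize (Hv z Hz).
  assert (Hv2 := filterlim_comp _ _ _ _ opp _ _ _ Hv (filterlim_opp (v' z))).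
  pose proof (within_proper z Hz) as HP.
  apply (filterlim_locally_unique (F := within (fun y => 0 <= y <= 1 /\ y <> z) (locally z))
    (fun y => (u y - u z) / (y - z))).
  exact Hu.
  eapply filterlim_ext_loc; [|exact Hv2].
  unfold within. apply filter_forall. intros y [Hy Hne].
  rewrite (Huv y Hy), (Huv z Hz). unfold opp; simpl. field. lra.
Qed.

Lemma is_derive_Rplus f g x a b : is_derive f x a -> is_derive g x b -> is_derive (fun t => f t + g t) x (a + b).
Proof. intros; exact (is_derive_plus f g x a b H H0). Qed.
Lemma is_derive_Rminus f g x a b : is_derive f x a -> is_derive g x b -> is_derive (fun t => f t - g t) x (a - b).
Proof. intros; exact (is_derive_minus f g x a b H H0). Qed.

Lemma abs_le_inv v w : Rabs v <= w -> - w <= v <= w.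
Proof. intros; pose proof (Rle_abs v); pose proof (Rle_abs (-v)); rewrite Rabs_Ropp in *; lra. Qed.

Definition clamp p q t := Rmax p (Rmin q t).

Lemma clamp_in p q t : p <= q -> p <= clamp p q t <= q.
Proof. unfold clamp, Rmax, Rmin; intros; repeat destruct Rle_dec; lra. Qed.
Lemma clamp_id p q t : p <= t <= q -> clamp p q t = t.
Proof. unfold clamp, Rmax, Rmin; intros; repeat destruct Rle_dec; lra. Qed.
Lemma clamp_lip p q t c : p <= q -> p <= c <= q -> Rabs (clamp p q t - c) <= Rabs (t - c).
Proof. unfold clamp, Rmax, Rmin; intros; repeat destruct Rle_dec; unfold Rabs; repeat destruct Rcase_abs; lra. Qed.

Lemma incr g g' p q : p < q ->
  (forall t, p <= t <= q -> forall eps, 0 < eps -> exists d, 0 < d /\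
      forall y, p <= y <= q -> Rabs (y - t) < d -> Rabs (g y - g t) < eps) ->
  (forall s, p < s < q -> is_derive g s (g' s) /\ 0 <= g' s) -> g p <= g q.
Proof.
  intros Hpq Hc Hd.
  destruct (MVT_gen (fun t => g (clamp p q t)) p q (fun s => Rmax 0 (g' s))) as [c [Hc1 Hc2]].
  - rewrite Rmin_left, Rmax_right by lra. intros s Hs.
    destruct (Hd s Hs) as [Hd1 Hd2]. rewrite Rmax_right by lra.
    apply (is_derive_ext_loc g). 2: exact Hd1.
    assert (Hp : 0 < Rmin (s - p) (q - s)) by (apply Rmin_pos; lra).
    exists (mkposreal _ Hp). intros t Ht. apply ball_R in Ht. simpl in Ht.
    pose proof (Rmin_l (s-p) (q-s)). pose proof (Rmin_r (s-p) (q-s)).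
    rewrite clamp_id; auto. apply Rabs_def2 in Ht. unfold minus, plus, opp in Ht; simpl in Ht. lra.
  - rewrite Rmin_left, Rmax_right by lra. intros c Hc0.
    intros eps Heps. destruct (Hc c Hc0 eps Heps) as [d [Hd0 Hd1]].
    exists d. split; auto. intros t [_ Ht]. simpl in Ht |- *. unfold Rdist in *.
    rewrite (clamp_id p q c) by lra.
    apply Hd1. apply clamp_in; lra.
    eapply Rle_lt_trans. apply clamp_lip; lra. exact Ht.
  - rewrite (clamp_id p q p), (clamp_id p q q) in Hc2 by lra.
    assert (0 <= Rmax 0 (g' c)) by apply Rmax_l.
    assert (0 <= Rmax 0 (g' c) * (q - p)) by (apply Rmult_le_pos; lra). lra.
Qed.

Definition cont_ed (f : R -> R) t := forall eps, 0 < eps -> exists d, 0 < d /\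
  forall y, 0 <= y <= 1 -> Rabs (y - t) < d -> Rabs (f y - f t) < eps.

Lemma cont_ed_der f l t : is_derive f t l -> cont_ed f t.
Proof.
  intros H. apply is_derive_Reals in H.
  assert (Hc : continuity_pt f t) by (apply derivable_continuous_pt; exists l; exact H).
  intros eps Heps. destruct (Hc eps Heps) as [d [Hd Hd1]].
  exists d. split; auto. intros y _ Hy.
  destruct (Req_dec y t) as [->|Hne]. rewrite Rminus_eq_0, Rabs_R0; auto.
  apply (Hd1 y). split. split. exact I. auto. exact Hy.
Qed.

Lemma cont_ed_comb f g t (sg : R) : (sg = 1 \/ sg = -1) -> cont_ed f t -> cont_ed g t ->
  cont_ed (fun y => f y + sg * g y) t.
Proof.
  intros Hs Hf Hg eps Heps.
  destruct (Hf (eps/2)) as [d1 [Hd1 H1]]; [lra|].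
  destruct (Hg (eps/2)) as [d2 [Hd2 H2]]; [lra|].
  exists (Rmin d1 d2). split. apply Rmin_pos; auto.
  intros y Hy Hyt. pose proof (Rmin_l d1 d2). pose proof (Rmin_r d1 d2).
  specialize (H1 y Hy ltac:(lra)). specialize (H2 y Hy ltac:(lra)).
  replace (f y + sg * g y - (f t + sg * g t)) with ((f y - f t) + sg * (g y - g t)) by ring.
  eapply Rle_lt_trans. apply Rabs_triang. rewrite Rabs_mult.
  assert (Hm1 : Rabs (-1) = 1) by (rewrite Rabs_left; lra).
  destruct Hs as [->| ->]; [rewrite Rabs_R1 | rewrite Hm1]; lra.
Qed.

Lemma cmp_lt phi phi' P P' psi psi' p q : 0 <= p -> p < q -> q <= 1 ->
  is_deriv_01 phi phi' -> (forall s, is_derive P s (P' s)) -> (forall s, is_derive psi s (psi' s)) ->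
  (forall s, p < s < q -> Rabs (phi' s - P' s) <= psi' s) ->
  Rabs ((phi q - P q) - (phi p - P p)) <= psi q - psi p.
Proof.
  intros H0 Hpq H1 Hphi HP Hpsi Hb.
  assert (HC : forall sg, (sg = 1 \/ sg = -1) -> forall t, p <= t <= q -> forall eps, 0 < eps -> exists d, 0 < d /\
      forall y, p <= y <= q -> Rabs (y - t) < d ->
      Rabs ((psi y + sg * (phi y - P y)) - (psi t + sg * (phi t - P t))) < eps).
  { intros sg Hsg t Ht eps Heps.
    assert (Hce : cont_ed (fun y => psi y + sg * (fun z => phi z + (-1) * P z) y) t).
    { apply cont_ed_comb; auto. apply (cont_ed_der _ (psi' t)); auto.
      apply cont_ed_comb; auto.
      intros e He. destruct (deriv_cont phi phi' t Hphi ltac:(lra) e He) as [d Hd]. exists d; exact Hd.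
      apply (cont_ed_der _ (P' t)); auto. }
    destruct (Hce eps Heps) as [d [Hd Hd1]]. exists d. split; auto.
    intros y Hy Hyt. specialize (Hd1 y ltac:(lra) Hyt). cbv beta in Hd1.
    replace (phi y - P y) with (phi y + -1 * P y) by ring.
    replace (phi t - P t) with (phi t + -1 * P t) by ring. exact Hd1. }
  assert (HD : forall sg, (sg = 1 \/ sg = -1) -> forall s, p < s < q ->
     is_derive (fun y => psi y + sg * (phi y - P y)) s (psi' s + sg * (phi' s - P' s)) /\
     0 <= psi' s + sg * (phi' s - P' s)).
  { intros sg Hsg s Hs. split.
    - apply is_derive_Rplus. auto. apply is_derive_scal.
      apply is_derive_Rminus. apply deriv_interior; auto; lra. auto.
    - specialize (Hb s Hs). destruct Hsg as [->| ->]; apply abs_le_inv in Hb; lra. }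
  pose proof (incr _ _ p q Hpq (HC 1 (or_introl eq_refl)) (HD 1 (or_introl eq_refl))).
  pose proof (incr _ _ p q Hpq (HC (-1) (or_intror eq_refl)) (HD (-1) (or_intror eq_refl))).
  apply Rabs_le. lra.
Qed.

Lemma cmp phi phi' P P' psi psi' p q : 0 <= p <= 1 -> 0 <= q <= 1 ->
  is_deriv_01 phi phi' -> (forall s, is_derive P s (P' s)) -> (forall s, is_derive psi s (psi' s)) ->
  (forall s, Rmin p q < s < Rmax p q -> Rabs (phi' s - P' s) <= psi' s) ->
  Rabs ((phi q - P q) - (phi p - P p)) <= Rabs (psi q - psi p).
Proof.
  intros Hp Hq Hphi HP Hpsi Hb.
  destruct (Rtotal_order p q) as [Hlt|[Heq|Hgt]].
  - eapply Rle_trans. apply (cmp_lt phi phi' P P' psi psi'); auto; try lra.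
    intros s Hs; apply Hb; rewrite Rmin_left, Rmax_right; lra. apply Rle_abs.
  - subst. replace (phi q - P q - (phi q - P q)) with 0 by ring. rewrite Rabs_R0. apply Rabs_pos.
  - rewrite Rabs_minus_sym, (Rabs_minus_sym (psi q)).
    eapply Rle_trans. apply (cmp_lt phi phi' P P' psi psi'); auto; try lra.
    intros s Hs; apply Hb; rewrite Rmin_right, Rmax_left; lra. apply Rle_abs.
Qed.

Definition TP (c : nat -> R) (n : nat) (u : R) := sum_f_R0 (fun i => c i * u ^ i / INR (fact i)) n.

Lemma TP_ext c d n u : (forall i, c i = d i) -> TP c n u = TP d n u.
Proof. intros H; unfold TP; induction n; simpl; rewrite ?IHn, ?H; auto. Qed.

Lemma TP_0 c n : TP c n 0 = c 0%nat.
Proof. induction n. unfold TP; simpl; field. unfold TP in *; simpl sum_f_R0. rewrite IHn. replace (0 * 0 ^ n) with 0 by ring. unfold Rdiv; ring. Qed.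

Lemma mono_deriv k c u : is_derive (fun u => c * u ^ S k / INR (fact (S k))) u (c * u ^ k / INR (fact k)).
Proof.
  auto_derive. auto.
  change (match k with 0%nat => 1 | S _ => INR k + 1 end) with (INR (S k)).
  change (fact k + k * fact k)%nat with (fact (S k)). rewrite fact_simpl, mult_INR.
  pose proof (INR_fact_neq_0 k). assert (INR (S k) <> 0) by (apply not_0_INR; lia).
  field; auto.
Qed.

Lemma TP_deriv c n u : is_derive (TP c (S n)) u (TP (fun i => c (S i)) n u).
Proof.
  induction n.
  - unfold TP; simpl. auto_derive. auto. field.
  - unfold TP in *.
    change (is_derive (fun u => sum_f_R0 (fun i => c i * u ^ i / INR (fact i)) (S n) + c (S (S n)) * u ^ S (S n) / INR (fact (S (S n)))) u
      (sum_f_R0 (fun i => c (S i) * u ^ i / INR (fact i)) n + c (S (S n)) * u ^ S n / INR (fact (S n)))).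
    apply is_derive_Rplus. exact IHn. apply mono_deriv.
Qed.

Lemma TP_deriv_shift c n x s : is_derive (fun s => TP c (S n) (s - x)) s (TP (fun i => c (S i)) n (s - x)).
Proof.
  replace (TP (fun i => c (S i)) n (s - x)) with (scal 1 (TP (fun i => c (S i)) n (s - x))).
  apply (is_derive_comp (TP c (S n)) (fun s => s - x)). apply TP_deriv.
  auto_derive; auto; ring.
  unfold scal; simpl; unfold mult; simpl; ring.
Qed.

Lemma taylor F G m x h K : deriv_chain F G m -> 0 <= x <= 1 -> 0 <= x + h <= 1 ->
  (forall s, Rmin x (x + h) <= s <= Rmax x (x + h) -> Rabs (G m s - G m x) <= K) ->
  Rabs (F (x + h) - TP (fun i => G i x) m h) <= K * Rabs h ^ m / INR (fact m).
Proof.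
  intros [HG0 HGd] Hx Hxh HK.
  assert (Hbt : forall t, Rmin x (x + h) <= t <= Rmax x (x + h) -> 0 <= t <= 1).
  { intros t Ht. unfold Rmin, Rmax in Ht; destruct Rle_dec; lra. }
  assert (HK0 : 0 <= K).
  { eapply Rle_trans. apply Rabs_pos. apply (HK x). unfold Rmin, Rmax; destruct Rle_dec; lra. }
  assert (Main : forall n, (n <= m)%nat -> forall t, Rmin x (x + h) <= t <= Rmax x (x + h) ->
     Rabs (G (m - n)%nat t - TP (fun i => G (m - n + i)%nat x) n (t - x)) <= K * Rabs (t - x) ^ n / INR (fact n)).
  { induction n; intros Hn t Ht.
    - unfold TP; simpl. rewrite Nat.sub_0_r, Nat.add_0_r.
      replace (G m x * 1 / 1) with (G m x) by field. replace (K * 1 / 1) with K by field. auto.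
    - set (k := (m - S n)%nat).
      set (c := fun i => G (m - S n + i)%nat x).
      set (sg := if Rle_dec x t then 1 else -1).
      assert (Hsg : sg * sg = 1) by (unfold sg; destruct Rle_dec; ring).
      assert (Hsgs : forall s, Rmin x t < s < Rmax x t -> sg * (s - x) = Rabs (s - x)).
      { intros s Hs. unfold sg, Rmin, Rmax in Hs |- *. destruct (Rle_dec x t).
        rewrite Rabs_pos_eq; lra. rewrite Rabs_left; lra. }
      assert (Hsgt : Rabs (sg * (t - x)) = Rabs (t - x)).
      { rewrite Rabs_mult. unfold sg; destruct Rle_dec. rewrite Rabs_R1; ring.
        rewrite Rabs_left by lra. ring. }
      pose proof (Hbt t Ht) as Ht01.
      assert (Hcmp := cmp (G k) (G (S k)) (fun s => TP c (S n) (s - x)) (fun s => TP (fun i => c (S i)) n (s - x))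
         (fun s => sg * K * (sg * (s - x)) ^ S n / INR (fact (S n)))
         (fun s => K * (sg * (s - x)) ^ n / INR (fact n)) x t Hx Ht01).
      assert (Hk : (k < m)%nat) by (unfold k; lia).
      specialize (Hcmp (HGd k Hk) (fun s => TP_deriv_shift c n x s)).
      lapply Hcmp; clear Hcmp.
      + intros Hcmp. lapply Hcmp; clear Hcmp.
        * intros Hcmp. rewrite Rminus_eq_0, TP_0 in Hcmp. unfold c in Hcmp. rewrite Nat.add_0_r in Hcmp.
          fold k in Hcmp. rewrite Rminus_eq_0, Rminus_0_r in Hcmp.
          replace (sg * K * (sg * 0) ^ S n / INR (fact (S n))) with 0 in Hcmp by (rewrite Rmult_0_r, pow_i by lia; unfold Rdiv; ring).
          rewrite Rminus_0_r in Hcmp.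
          replace (sg * K * (sg * (t - x)) ^ S n / INR (fact (S n))) with (sg * (K * (sg * (t - x)) ^ S n / INR (fact (S n)))) in Hcmp by (field; apply INR_fact_neq_0).
          rewrite Rabs_mult in Hcmp.
          replace (Rabs sg) with 1 in Hcmp by (unfold sg; destruct Rle_dec; [rewrite Rabs_R1|rewrite Rabs_left by lra]; lra).
          rewrite Rmult_1_l in Hcmp.
          unfold Rdiv in Hcmp. rewrite !Rabs_mult, <- RPow_abs, Hsgt in Hcmp.
          assert (Hfi : 0 <= / INR (fact (S n))) by (left; apply Rinv_0_lt_compat, INR_fact_lt_0).
          rewrite (Rabs_pos_eq K), (Rabs_pos_eq (/ _)) in Hcmp by auto.
          unfold k in Hcmp. exact Hcmp.
        * intros s Hs.
          assert (Hs2 : Rmin x (x + h) <= s <= Rmax x (x + h)).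
          { unfold Rmin, Rmax in *; repeat destruct Rle_dec; lra. }
          specialize (IHn ltac:(lia) s Hs2).
          replace (S k) with (m - n)%nat by (unfold k; lia).
          rewrite (TP_ext _ (fun i => G (m - n + i)%nat x)).
          rewrite Hsgs, RPow_abs by auto.
          rewrite <- RPow_abs. exact IHn.
          intros i; unfold c; f_equal; lia.
      + intros s. auto_derive. auto.
        change (match n with 0%nat => 1 | S _ => INR n + 1 end) with (INR (S n)).
        change (fact n + n * fact n)%nat with (fact (S n)). rewrite fact_simpl, mult_INR.
        pose proof (INR_fact_neq_0 n). assert (INR (S n) <> 0) by (apply not_0_INR; lia).
        replace (s + - x) with (s - x) by ring.
        transitivity ((sg * sg) * (K * (sg * (s - x)) ^ n / INR (fact n))). field; auto.
        rewrite Hsg; ring.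
  }
  specialize (Main m (le_n m) (x + h)).
  rewrite Nat.sub_diag in Main. rewrite <- (HG0 (x + h) Hxh).
  replace (x + h - x) with h in Main by ring.
  rewrite (TP_ext _ (fun i => G i x)) in Main.
  apply Main. unfold Rmin, Rmax; destruct Rle_dec; lra.
  intros; f_equal.
Qed.

Lemma Rpower_mono u v e : 0 < u -> u <= v -> 0 < e -> Rpower u e <= Rpower v e.
Proof. intros. unfold Rpower. apply exp_le_m. apply Rmult_le_compat_l. lra. apply ln_le; lra. Qed.

Lemma core F G m beta a N y x h :
  0 < beta -> INR m < beta -> deriv_chain F G m -> 0 <= x <= 1 -> 0 <= x + h <= 1 -> h <> 0 ->
  0 < a -> 0 < N -> F x = y -> 0 < y ->
  beta * ln (Rabs h) <= beta * ln a + ln y - ln N ->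
  (forall s, 0 <= s <= 1 -> s <> x -> Rabs (G m s - G m x) <= N * Rpower (Rabs (s - x)) (beta - INR m)) ->
  (forall j, (1 <= j <= m)%nat -> G j x <> 0 ->
     beta * ln (Rabs (G j x)) - (beta - INR j) * ln y <= INR j * ln N) ->
  exp a - 1 + Rpower a beta / INR (fact m) <= 1 / 2 ->
  Rabs (F (x + h) - F x) <= 1 / 2 * y.
Proof.
  intros Hb Hm Hch Hx Hxh Hh Ha HN HFx Hy HL HHol HHt Hcond.
  assert (Hh0 : 0 < Rabs h) by (apply Rabs_pos_lt; auto).
  set (L := ln (Rabs h)).
  set (K := N * Rpower (Rabs h) (beta - INR m)).
  assert (HK0 : 0 <= K) by (unfold K, Rpower; left; apply Rmult_lt_0_compat; auto; apply exp_pos).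
  assert (HT := taylor F G m x h K Hch Hx Hxh).
  lapply HT; clear HT.
  2: { intros s Hs. destruct (Req_dec s x) as [->|Hne].
       rewrite Rminus_eq_0, Rabs_R0; auto.
       assert (Hs01 : 0 <= s <= 1) by (unfold Rmin, Rmax in Hs; destruct Rle_dec; lra).
       eapply Rle_trans. apply HHol; auto.
       unfold K. apply Rmult_le_compat_l. lra. apply Rpower_mono. apply Rabs_pos_lt; lra.
       unfold Rmin, Rmax in Hs; destruct Rle_dec; unfold Rabs; repeat destruct Rcase_abs; lra. lra. }
  intros HT.
  assert (Hrem : K * Rabs h ^ m <= Rpower a beta * y).
  { unfold K, Rpower. rewrite <- (exp_ln N) by auto. rewrite <- (exp_ln y) by auto.
    rewrite <- (exp_ln (Rabs h ^ m)) by (apply pow_lt; auto).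
    rewrite ln_pow by auto. fold L. rewrite <- !exp_plus. apply exp_le_m. unfold L in *; lra. }
  assert (Hterm : forall j, (1 <= j <= m)%nat -> Rabs (G j x) * Rabs h ^ j <= a ^ j * y).
  { intros j Hj. destruct (Req_dec (G j x) 0) as [H0|H0].
    rewrite H0, Rabs_R0, Rmult_0_l. apply Rmult_le_pos. apply pow_le; lra. lra.
    specialize (HHt j Hj H0).
    assert (Hu : 0 < Rabs (G j x)) by (apply Rabs_pos_lt; auto).
    rewrite <- (exp_ln (Rabs (G j x))) by auto. rewrite <- (exp_ln (Rabs h ^ j)) by (apply pow_lt; auto).
    rewrite <- (exp_ln (a ^ j)) by (apply pow_lt; auto). rewrite <- (exp_ln y) by auto.
    rewrite !ln_pow by auto. rewrite <- !exp_plus. apply exp_le_m.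
    apply (Rmult_le_reg_l beta); auto.
    assert (HjL : INR j * (beta * L) <= INR j * (beta * ln a + ln y - ln N)).
    { apply Rmult_le_compat_l. apply pos_INR. exact HL. }
    unfold L in *. nra. }
  set (c := fun i => G i x).
  assert (Hsum : forall n, (n <= m)%nat -> Rabs (TP c n h - c 0%nat) <=
      y * (sum_f_R0 (fun i => a ^ i / INR (fact i)) n - 1)).
  { induction n; intros Hn.
    - unfold TP; simpl. replace (c 0%nat * 1 / 1 - c 0%nat) with 0 by field. rewrite Rabs_R0. lra.
    - change (TP c (S n) h) with (TP c n h + c (S n) * h ^ S n / INR (fact (S n))).
      change (sum_f_R0 (fun i => a ^ i / INR (fact i)) (S n)) with
        (sum_f_R0 (fun i => a ^ i / INR (fact i)) n + a ^ S n / INR (fact (S n))).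
      specialize (IHn ltac:(lia)).
      assert (Ht := Hterm (S n) ltac:(lia)).
      assert (Hf : 0 < INR (fact (S n))) by apply INR_fact_lt_0.
      assert (Habs : Rabs (c (S n) * h ^ S n / INR (fact (S n))) <= a ^ S n * y / INR (fact (S n))).
      { unfold Rdiv. rewrite !Rabs_mult, <- RPow_abs, (Rabs_pos_eq (/ _)) by (left; apply Rinv_0_lt_compat; auto).
        apply Rmult_le_compat_r. left; apply Rinv_0_lt_compat; auto. exact Ht. }
      replace (TP c n h + c (S n) * h ^ S n / INR (fact (S n)) - c 0%nat) with
        ((TP c n h - c 0%nat) + c (S n) * h ^ S n / INR (fact (S n))) by ring.
      eapply Rle_trans. apply Rabs_triang.
      replace (y * (sum_f_R0 (fun i => a ^ i / INR (fact i)) n + a ^ S n / INR (fact (S n)) - 1))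
        with (y * (sum_f_R0 (fun i => a ^ i / INR (fact i)) n - 1) + a ^ S n * y / INR (fact (S n))) by (field; lra).
      lra. }
  specialize (Hsum m (le_n m)).
  assert (Hc0 : c 0%nat = y) by (unfold c; destruct Hch as [H0 _]; rewrite H0; auto).
  rewrite Hc0 in Hsum.
  pose proof (exp_ge_taylor a m ltac:(lra)) as Hexp.
  assert (Hf : 0 < INR (fact m)) by apply INR_fact_lt_0.
  assert (HT2 : K * Rabs h ^ m / INR (fact m) <= Rpower a beta * y / INR (fact m)).
  { unfold Rdiv. apply Rmult_le_compat_r. left; apply Rinv_0_lt_compat; auto. exact Hrem. }
  replace (F (x + h) - F x) with ((F (x + h) - TP (fun i => G i x) m h) + (TP c m h - y)) by (rewrite <- HFx; unfold c; ring).
  eapply Rle_trans. apply Rabs_triang.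
  assert (y * (exp a - 1 + Rpower a beta / INR (fact m)) <= y * (1/2)) by (apply Rmult_le_compat_l; lra).
  assert (Rpower a beta * y / INR (fact m) = y * (Rpower a beta / INR (fact m))) by (field; lra).
  nra.
Qed.

Lemma lub_ge (E : R -> Prop) r : E r -> Rbar_le (Finite r) (Lub_Rbar E).
Proof. intros H. destruct (Lub_Rbar_correct E) as [Hub _]. apply Hub, H. Qed.

Lemma maxb_l u v : Rbar_le u (Rbar_maxb u v).
Proof. unfold Rbar_maxb. destruct excluded_middle_informative; auto. apply Rbar_le_refl. Qed.
Lemma maxb_r u v : Rbar_le v (Rbar_maxb u v).
Proof. unfold Rbar_maxb. destruct excluded_middle_informative. apply Rbar_le_refl.
  apply Rbar_lt_le, Rbar_not_le_lt; auto. Qed.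

Lemma fold_ge l u : In u l -> Rbar_le u (fold_right Rbar_maxb (Finite 0) l).
Proof.
  induction l; simpl. tauto. intros [->|H]. apply maxb_l.
  eapply Rbar_le_trans. apply IHl, H. apply maxb_r.
Qed.
Lemma fold_nonneg l : Rbar_le (Finite 0) (fold_right Rbar_maxb (Finite 0) l).
Proof. induction l. simpl. apply Rle_refl. simpl fold_right. eapply Rbar_le_trans. apply IHl. apply maxb_r. Qed.

Lemma plus_nonneg u v : Rbar_le (Finite 0) u -> Rbar_le (Finite 0) v -> Rbar_le (Finite 0) (Rbar_plus u v).
Proof. destruct u, v; simpl; intros; try tauto; lra. Qed.

Lemma plus_fin u v : Rbar_le (Finite 0) u -> Rbar_le (Finite 0) v -> is_finite (Rbar_plus u v) ->
  u = Finite (real u) /\ v = Finite (real v) /\ 0 <= real u /\ 0 <= real v /\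
  real (Rbar_plus u v) = real u + real v.
Proof. destruct u, v; simpl; intros H1 H2 H3; try tauto; unfold is_finite in H3; simpl in H3; try discriminate.
  all: repeat split; auto. Qed.

Lemma sup01_nonneg F : (forall x, 0 <= F x) -> Rbar_le (Finite 0) (sup01 F).
Proof. intros H. eapply Rbar_le_trans. 2: apply lub_ge. 2: exists 0; split; [lra|reflexivity]. apply H. Qed.

Lemma hterm_ext beta m G N x : 0 < N -> Rbar_le (H_seminorm beta m G) (Finite N) -> 0 <= x <= 1 ->
  0 < G 0%nat x -> forall j, (1 <= j <= m)%nat -> G j x <> 0 ->
  beta * ln (Rabs (G j x)) - (beta - INR j) * ln (G 0%nat x) <= INR j * ln N.
Proof.
  intros HN HH Hx HG0 j Hj HGj.
  assert (Hin : In (Rbar_root (Hterm_sup beta G j) j) (map (fun j => Rbar_root (Hterm_sup beta G j) j) (seq 1 m))).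
  { apply (in_map (fun j => Rbar_root (Hterm_sup beta G j) j)). apply in_seq. lia. }
  assert (Hle := Rbar_le_trans _ _ _ (fold_ge _ _ Hin) HH). clear Hin HH.
  unfold Hterm_sup in Hle. destruct excluded_middle_informative as [_|Hno]. simpl in Hle; tauto.
  set (S := fun r => r = 0 \/ (exists x0, 0 <= x0 <= 1 /\ G 0%nat x0 <> 0 /\
      r = rpow (Rabs (G j x0)) beta / rpow (Rabs (G 0%nat x0)) (beta - INR j))) in Hle.
  set (u := Rabs (G j x)). set (g0 := G 0%nat x).
  assert (Hu : 0 < u) by (apply Rabs_pos_lt; auto).
  set (r := Rpower u beta / Rpower g0 (beta - INR j)).
  assert (Hr : S r).
  { right. exists x. split; auto. split. lra. unfold r, rpow.
    fold u. rewrite (Rabs_pos_eq (G 0%nat x)) by lra. fold g0.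
    destruct Req_EM_T; [lra|]. destruct Req_EM_T; [unfold g0 in *; lra|]. reflexivity. }
  assert (Hge := lub_ge S r Hr).
  assert (Hrpos : 0 < r) by (unfold r, Rpower; apply Rdiv_lt_0_compat; apply exp_pos).
  destruct (Lub_Rbar S) as [s| |]; simpl in Hge, Hle; try tauto.
  unfold rpow in Hle. destruct Req_EM_T; [lra|].
  assert (Hj0 : 0 < INR j) by (apply lt_0_INR; lia).
  assert (H1 : ln r <= ln s) by (apply ln_le; lra).
  assert (H2 : / INR j * ln s <= ln N).
  { unfold Rpower in Hle. rewrite <- (ln_exp (/ INR j * ln s)). apply ln_le. apply exp_pos. exact Hle. }
  assert (H3 : ln r = beta * ln u - (beta - INR j) * ln g0).
  { unfold r, Rpower. rewrite ln_div by apply exp_pos. rewrite !ln_exp. ring. }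
  assert (H4 : ln s <= INR j * ln N).
  { apply Rmult_le_compat_l with (r := INR j) in H2; [|lra].
    replace (INR j * (/ INR j * ln s)) with (ln s) in H2 by (field; lra). exact H2. }
  fold u g0. lra.
Qed.

Definition cE (j : nat) : R := match j with 0%nat => 1 | _ => 0 end.

Lemma E_rel f D E m : deriv_chain f D m -> deriv_chain (fun x => 1 - f x) E m ->
  forall j, (j <= m)%nat -> forall z, 0 <= z <= 1 -> E j z = cE j - D j z.
Proof.
  intros [HD0 HDd] [HE0 HEd]. induction j; intros Hj z Hz.
  - rewrite HE0, HD0 by auto. reflexivity.
  - rewrite (deriv_unique (E j) (E (S j)) (D j) (D (S j)) (cE j) (HEd j ltac:(lia)) (HDd j ltac:(lia))
      (fun z Hz => IHj ltac:(lia) z Hz) z Hz). simpl; ring.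
Qed.

Theorem lemmaB4 (beta : R) (m : nat) (f : R -> R) (D E : nat -> R -> R) (a : R) :
  0 < beta ->
  INR m < beta <= INR m + 1 ->
  (forall x, 0 <= x <= 1 -> 0 <= f x <= 1) ->
  deriv_chain f D m ->
  deriv_chain (fun x => 1 - f x) E m ->
  is_finite (HB_norm beta m D E) ->
  0 < a ->
  (exp a - 1) + Rpower a beta / INR (fact m) <= 1 / 2 ->
  forall x h, 0 <= x <= 1 -> 0 <= x + h <= 1 ->
  Rabs h <= a * rpow (Rmin (f x) (1 - f x) / real (HB_norm beta m D E)) (/ beta) ->
  Rabs (f (x + h) - f x) = Rabs ((1 - f x) - (1 - f (x + h))) /\
  Rabs (f (x + h) - f x) <= 1 / 2 * Rmin (f x) (1 - f x) /\
  1 / 4 * (f x * (1 - f x)) <= f (x + h) * (1 - f (x + h)) /\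
  f (x + h) * (1 - f (x + h)) <= 9 / 4 * (f x * (1 - f x)).
Proof.
  intros Hb [Hm1 Hm2] Hf HD HE Hfin Ha Hcond x h Hx Hxh Hh.
  set (g := Rmin (f x) (1 - f x)) in *.
  pose proof (Hf x Hx) as Hfx. pose proof (Hf (x + h) Hxh) as Hfxh.
  assert (Hg1 : g <= f x) by apply Rmin_l. assert (Hg2 : g <= 1 - f x) by apply Rmin_r.
  assert (Hg0 : 0 <= g) by (unfold g, Rmin; destruct Rle_dec; lra).
  set (S0 := sup01 (fun x => Rabs (D 0%nat x))) in *.
  set (Sm := sup01 (fun x => Rabs (D m x))) in *.
  set (Hol := Lub_Rbar (fun r => exists x y, 0 <= x <= 1 /\ 0 <= y <= 1 /\ x <> y /\
          r = Rabs (D m x - D m y) / Rpower (Rabs (x - y)) (beta - INR m))) in *.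
  set (HDn := H_seminorm beta m D) in *. set (HEn := H_seminorm beta m E) in *.
  assert (HBe : HB_norm beta m D E = Rbar_plus (Rbar_plus S0 (Rbar_plus Sm Hol)) (Rbar_plus HDn HEn)) by reflexivity.
  assert (HS0 : Rbar_le (Finite 0) S0) by (apply sup01_nonneg; intros; apply Rabs_pos).
  assert (HSm : Rbar_le (Finite 0) Sm) by (apply sup01_nonneg; intros; apply Rabs_pos).
  assert (HHol : Rbar_le (Finite 0) Hol).
  { eapply Rbar_le_trans. 2: apply lub_ge. 2: exists 0, 1; split; [lra|split; [lra|split; [lra|reflexivity]]].
    simpl. apply Rdiv_le_0_compat. apply Rabs_pos. unfold Rpower; apply exp_pos. }
  assert (HHD : Rbar_le (Finite 0) HDn) by apply fold_nonneg.
  assert (HHE : Rbar_le (Finite 0) HEn) by apply fold_nonneg.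
  rewrite HBe in Hfin, Hh.
  destruct (plus_fin _ _ (plus_nonneg _ _ HS0 (plus_nonneg _ _ HSm HHol)) (plus_nonneg _ _ HHD HHE) Hfin)
    as [HA [HBB [HA0 [HB0 HNe]]]].
  destruct (plus_fin _ _ HS0 (plus_nonneg _ _ HSm HHol) (eq_sym HA)) as [_ [HA2 [HS00 [HA20 HA2e]]]].
  destruct (plus_fin _ _ HSm HHol (eq_sym HA2)) as [_ [HHolf [HSm0 [HHol0 HA3e]]]].
  destruct (plus_fin _ _ HHD HHE (eq_sym HBB)) as [HDf [HEf [HD00 [HE00 HB2e]]]].
  set (N := real (Rbar_plus (Rbar_plus S0 (Rbar_plus Sm Hol)) (Rbar_plus HDn HEn))) in *.
  assert (HN0 : 0 <= N) by lra.
  assert (HholN : real Hol <= N) by lra.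
  assert (HDN : Rbar_le HDn (Finite N)) by (rewrite HDf; simpl; lra).
  assert (HEN : Rbar_le HEn (Finite N)) by (rewrite HEf; simpl; lra).
  assert (HHolD : forall s t, 0 <= s <= 1 -> 0 <= t <= 1 -> s <> t ->
     Rabs (D m s - D m t) <= N * Rpower (Rabs (s - t)) (beta - INR m)).
  { intros s t Hs Ht Hst.
    assert (Hl := lub_ge (fun r => exists x y, 0 <= x <= 1 /\ 0 <= y <= 1 /\ x <> y /\
          r = Rabs (D m x - D m y) / Rpower (Rabs (x - y)) (beta - INR m))
          (Rabs (D m s - D m t) / Rpower (Rabs (s - t)) (beta - INR m))).
    lapply Hl. 2: { exists s, t; auto. } clear Hl; intros Hl. fold Hol in Hl. rewrite HHolf in Hl. simpl in Hl.
    assert (HP : 0 < Rpower (Rabs (s - t)) (beta - INR m)) by (unfold Rpower; apply exp_pos).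
    replace (Rabs (D m s - D m t)) with (Rabs (D m s - D m t) / Rpower (Rabs (s - t)) (beta - INR m) * Rpower (Rabs (s - t)) (beta - INR m)) by (field; lra).
    apply Rmult_le_compat_r; lra. }
  assert (Hmain : Rabs (f (x + h) - f x) <= 1 / 2 * g).
  { destruct (Req_dec h 0) as [->|Hh0].
    - rewrite Rplus_0_r, Rminus_eq_0, Rabs_R0. lra.
    - fold N in Hh. unfold rpow in Hh. destruct Req_EM_T as [Hq|Hq].
      { assert (Rabs h <= 0) by lra. pose proof (Rabs_pos_lt h Hh0). lra. }
      assert (HgN : 0 < g /\ 0 < N).
      { split.
        - destruct Hg0 as [Hg0|Hg0]; auto. rewrite <- Hg0 in Hq. unfold Rdiv in Hq. rewrite Rmult_0_l in Hq. lra.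
        - destruct HN0 as [HN0|HN0]; auto. rewrite <- HN0 in Hq. unfold Rdiv in Hq. rewrite Rinv_0, Rmult_0_r in Hq. lra. }
      destruct HgN as [Hgp HNp].
      assert (HL : beta * ln (Rabs h) <= beta * ln a + ln g - ln N).
      { assert (Hhp : 0 < Rabs h) by (apply Rabs_pos_lt; auto).
        apply ln_le in Hh; auto. unfold Rpower in Hh. rewrite ln_mult, ln_exp, ln_div in Hh by (auto; apply exp_pos).
        apply Rmult_le_compat_l with (r := beta) in Hh; [|lra].
        replace (beta * (ln a + / beta * (ln g - ln N))) with (beta * ln a + ln g - ln N) in Hh by (field; lra).
        exact Hh. }
      destruct (Rle_dec (f x) (1 - f x)) as [Hle|Hlt].
      + assert (Hgf : g = f x) by (unfold g; apply Rmin_left; auto).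
        rewrite Hgf in *.
        apply (core f D m beta a N (f x) x h Hb Hm1 HD Hx Hxh Hh0 Ha HNp eq_refl Hgp HL); [| |exact Hcond].
        * intros s Hs Hsx. apply HHolD; auto.
        * intros j Hj Hj0. pose proof (hterm_ext beta m D N x HNp HDN Hx) as HT.
          destruct HD as [HD0 _]. rewrite HD0 in HT by auto. apply HT; auto.
      + assert (Hgf : g = 1 - f x) by (unfold g; apply Rmin_right; lra).
        rewrite Hgf in *.
        replace (f (x + h) - f x) with (- ((1 - f (x + h)) - (1 - f x))) by ring. rewrite Rabs_Ropp.
        apply (core (fun z => 1 - f z) E m beta a N (1 - f x) x h Hb Hm1 HE Hx Hxh Hh0 Ha HNp eq_refl Hgp HL); [| |exact Hcond].
        * intros s Hs Hsx. rewrite !(E_rel f D E m HD HE m (le_n m)) by auto.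
          replace (cE m - D m s - (cE m - D m x)) with (- (D m s - D m x)) by ring. rewrite Rabs_Ropp.
          apply HHolD; auto.
        * intros j Hj Hj0. assert (HE0x : E 0%nat x = 1 - f x) by (destruct HE as [HE0 _]; apply HE0; auto).
          pose proof (hterm_ext beta m E N x HNp HEN Hx) as HT.
          rewrite HE0x in HT. apply HT; auto; lra. }
  split. f_equal; ring.
  split. exact Hmain.
  apply abs_le_inv in Hmain.
  split.
  - apply Rle_trans with ((f x / 2) * ((1 - f x) / 2)). lra.
    apply Rmult_le_compat; lra.
  - apply Rle_trans with ((3 * f x / 2) * (3 * (1 - f x) / 2)).
    apply Rmult_le_compat; lra. lra.
Qed.
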